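(* Let $G$ be a graph with $n\geq 1$ vertices and minimum degree $\delta$, and let $t\geq 1$ be an integer with $2\delta-n\geq t-2$. Then $G$ contains every 2-degenerate graph on $t$ vertices as a subgraph.
   Context: All graphs are finite and simple. A graph is 2-degenerate if every non-empty subgraph of it has a vertex of degree at most 2. *)

(* Defs.v *)
From mathcomp Require Import all_boot all_order all_algebra.
Set Implicit Arguments. Unset Strict Implicit. Unset Printing Implicit Defensive.

Definition simple_graph (V : finType) (e : rel V) : Prop :=
  symmetric e /\ irreflexive e.

Definition nbhd (V : finType) (e : rel V) (v : V) : {set V} := [set u | e v u].
Definition deg (V : finType) (e : rel V) (v : V) : nat := #|nbhd e v|.

Definition is_min_degree (V : finType) (e : rel V) (delta : nat) : Prop :=
  (forall v : V, delta <= deg e v) /\ (exists v : V, deg e v = delta).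

Definition two_degenerate (W : finType) (f : rel W) : Prop :=
  forall S : {set W}, S != set0 ->
    exists2 x, x \in S & #|[set y in S | f x y]| <= 2.

Definition contains_subgraph (V W : finType) (e : rel V) (f : rel W) : Prop :=
  exists g : W -> V, injective g /\ forall x y, f x y -> e (g x) (g y).

(* Main.v *)
Require Import Defs.
From mathcomp Require Import all_boot all_order all_algebra.
From mathcomp Require Import zify.
Import GRing.Theory Num.Theory.
Local Open Scope ring_scope.

Lemma key_lemma (V : finType) (e : rel V) (delta t : nat) :
  simple_graph e -> (forall v : V, delta <= deg e v)%N ->
  (t <= delta + 1)%N -> (delta < #|V|)%N -> (t + #|V| <= 2 * delta + 2)%N ->
  forall A U : {set V}, (#|A| <= 2)%N -> A \subset U -> (#|U| < t)%N ->
  exists v, v \notin U /\ forall a, a \in A -> e a v.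
Proof.
move=> [esym eirr] Hdeg Htd Hdv Htn A U HA AU HU.
move: AU; have : #|A| = 0%N \/ #|A| = 1%N \/ #|A| = 2%N by lia.
case=> [/cards0_eq -> AU | [/eqP/cards1P [a ->] AU | /eqP/cards2P [a [b [ab ->]]] AU]].
- have := cardsC U; have := max_card U => _ HC.
  have : (0 < #|~: U|)%N.
    lia.
  by case/card_gt0P => v; rewrite inE => Hv; exists v; split => // a; rewrite in_set0.
- have aU : a \in U by apply: (subsetP AU); rewrite inE.
  set N := nbhd e a.
  have H1 := cardsID U N.
  have H2 : N :&: U \subset U :\ a.
    apply/subsetP => y; rewrite !inE => /andP [Hy ->]; rewrite andbT.
    apply/eqP => Hya; move: Hy; rewrite Hya ?inE eirr //.
  have H3 := subset_leq_card H2.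
  have H4 := cardsD1 a U; rewrite aU in H4.
  have H5 := Hdeg a; rewrite /deg -/N in H5.
  have : (0 < #|N :\: U|)%N by lia.
  case/card_gt0P => v; rewrite inE => /andP [vU vN]; exists v; split => //.
  by move=> a'; rewrite inE => /eqP ->; move: vN; rewrite inE.
- have aU : a \in U by apply: (subsetP AU); rewrite !inE eqxx.
  have bU : b \in U by apply: (subsetP AU); rewrite !inE eqxx orbT.
  set Na := nbhd e a; set Nb := nbhd e b.
  set I := Na :&: Nb.
  have H1 := cardsUI Na Nb.
  have H2 := max_card (Na :|: Nb).
  have Ha := Hdeg a; have Hb := Hdeg b; rewrite /deg -/Na in Ha; rewrite /deg -/Nb in Hb.
  have H3 := cardsID U I.
  have H4 : I :&: U \subset U :\: [set a; b].
    apply/subsetP => y; rewrite !inE => /andP [/andP [Hya Hyb] ->]; rewrite andbT.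
    apply/negP => /orP [] /eqP Hy.
      by move: Hya; rewrite Hy ?inE eirr.
    by move: Hyb; rewrite Hy ?inE eirr.
  have H5 := subset_leq_card H4.
  have H6 := cardsID [set a; b] U.
  have H7 : U :&: [set a; b] = [set a; b].
    apply/setIidPr; apply/subsetP => y; rewrite !inE => /orP [] /eqP ->; done.
  rewrite H7 cards2 ab in H6.
  have : (0 < #|I :\: U|)%N.
    have HmV : #|V| = #|[set: V]| by rewrite cardsT.
    rewrite -/I in H1; have H6' : (2 + #|U :\: [set a; b]|)%N = #|U| by rewrite -H6. lia.
  case/card_gt0P => v; rewrite !inE => /andP [vU /andP [va vb]]; exists v; split => //.
  by move=> a'; rewrite !inE => /orP [] /eqP ->.
Qed.

Theorem lemma10 (V : finType) (e : rel V) (delta t : nat) :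
  simple_graph e -> (1 <= #|V|)%N -> is_min_degree e delta -> (1 <= t)%N ->
  (2 * (delta%:Z) - (#|V|)%:Z >= (t%:Z) - 2) ->
  forall (W : finType) (f : rel W),
    simple_graph f -> #|W| = t -> two_degenerate f ->
    contains_subgraph e f.
Proof.
move=> Hsg HV [Hdeg [v0 Hv0]] Ht Hineq W f [fsym firr] HW Hdeg2.
have Hesym := Hsg; case: Hsg => esym eirr.
have Hdv : (delta < #|V|)%N.
  rewrite -Hv0 /deg; have := cardsU1 v0 (nbhd e v0).
  rewrite inE eirr /= => H; have := max_card (v0 |: nbhd e v0); by rewrite H add1n.
have Htn : (t + #|V| <= 2 * delta + 2)%N by lia.
have Htd : (t <= delta + 1)%N by lia.
have main : forall n (S : {set W}), #|S| = n ->
  exists g : W -> V, {in S &, injective g} /\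
    (forall x y, x \in S -> y \in S -> f x y -> e (g x) (g y)).
  elim=> [|n IH] S HS.
    exists (fun _ => v0); split.
      by move=> x y; rewrite (cards0_eq HS) inE.
    by move=> x y; rewrite (cards0_eq HS) inE.
  have S0 : S != set0 by apply/eqP => S0; rewrite S0 cards0 in HS.
  case: (Hdeg2 S S0) => x xS Hx.
  set S' := S :\ x.
  have HS' : #|S'| = n by have := cardsD1 x S; rewrite xS HS; case.
  case: (IH S' HS') => g [ginj gedge].
  set U := g @: S'.
  set A := g @: [set y in S | f x y].
  have HA : (#|A| <= 2)%N by apply: leq_trans (leq_imset_card _ _) Hx.
  have AU : A \subset U.
    apply: imsetS; apply/subsetP => y; rewrite !inE => /andP [yS fxy].
    rewrite yS andbT; apply/eqP => yx; move: fxy; rewrite yx firr.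
    done.
  have HU : (#|U| < t)%N.
    have := leq_imset_card g S'; have := max_card S; rewrite HW -/U; lia.
  case: (@key_lemma V e delta t Hesym Hdeg Htd Hdv Htn A U HA AU HU) => v [vU vA].
  exists (fun z => if z == x then v else g z); split.
    move=> z1 z2 z1S z2S /=.
    case: eqP => [->|/eqP z1x]; case: eqP => [->|/eqP z2x] //.
    - move=> Hv; move: vU; rewrite Hv imset_f //.
      by rewrite !inE z2x.
    - move=> Hv; move: vU; rewrite -Hv imset_f //.
      by rewrite !inE z1x.
    - by apply: ginj; rewrite !inE ?z1x ?z2x.
  move=> x1 x2 x1S x2S fx /=.
  case: eqP => [E1|/eqP x1x]; case: eqP => [E2|/eqP x2x].
  - by move: fx; rewrite E1 E2 firr.
  - rewrite esym; apply: vA; apply: imset_f.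
    by rewrite inE x2S -E1.
  - apply: vA; apply: imset_f.
    by rewrite inE x1S fsym -E2.
  - by apply: gedge; rewrite // !inE ?x1x ?x2x.
case: (main _ [set: W] erefl) => g [ginj gedge].
exists g; split.
  by move=> a b; apply: ginj; rewrite inE.
by move=> a b; apply: gedge; rewrite inE.
Qed.
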